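(* Let $\beta\in(0,\tfrac12)$. Then $\mathcal{A}_\beta\ne\emptyset$; consequently $\lambda_1(\beta)=\sup\mathcal{A}_\beta$ is well-defined and strictly positive.
   Context: Tree: for an integer $m\ge2$, $\mathbb{T}_m$ has vertices the root $\emptyset$ and all finite sequences $(\emptyset,a_1,\dots,a_k)$, $a_i\in\{0,\dots,m-1\}$; $|x|$ is the level, successors of $x$ are $(x,i)$, $\hat x$ is the immediate predecessor of $x\ne\emptyset$. Operator: $p_\beta=\beta/(1-\beta)$ for $\beta\in(0,1)$. $\Delta_\beta u(\emptyset)=\frac1m\sum_{i=0}^{m-1}u(\emptyset,i)-u(\emptyset)$ and, for $x\ne\emptyset$, $\Delta_\beta u(x)=\big(\beta u(\hat x)+\frac{1-\beta}{m}\sum_{i=0}^{m-1}u(x,i)-u(x)\big)p_\beta^{-|x|}$. $\mathcal{A}_\beta=\{\lambda>0:\exists v:\mathbb{T}_m\to\mathbb{R}\text{ and constants }0<c<C\text{ with } c<v<C \text{ and } \Delta_\beta v+\lambda v\le0 \text{ on }\mathbb{T}_m\}$, $\lambda_1(\beta)=\sup\mathcal{A}_\beta$. *)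

(* Defs.v *)
From Stdlib Require Import Reals Lra List.
From Coquelicot Require Import Coquelicot.
Open Scope R_scope.

(* Vertices of T_m: a vertex (root, a_1, ..., a_k) is encoded as the list
   [a_k; ...; a_1] (most recent symbol first).  The root is [nil];
   the successor (x,i) is [i :: x]; the predecessor of [a :: x] is [x];
   the level |x| is [length x]. *)
Definition vertex (m : nat) (x : list nat) : Prop := List.Forall (fun a : nat => lt a m) x.

Fixpoint sumto (n : nat) (f : nat -> R) : R :=
  match n with O => 0 | S k => sumto k f + f k end.

Definition p_beta (beta : R) : R := beta / (1 - beta).

Definition Delta (m : nat) (beta : R) (u : list nat -> R) (x : list nat) : R :=
  match x with
  | nil => / INR m * sumto m (fun i => u (i :: nil)) - u nil
  | _ :: xhat =>
      (beta * u xhat + (1 - beta) / INR m * sumto m (fun i => u (i :: x)) - u x)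
        / (p_beta beta ^ length x)
  end.

Definition A_beta (m : nat) (beta : R) (lam : R) : Prop :=
  0 < lam /\
  exists (v : list nat -> R) (c C : R),
    0 < c /\ c < C /\
    (forall x, vertex m x -> c < v x /\ v x < C) /\
    (forall x, vertex m x -> Delta m beta v x + lam * v x <= 0).

Definition lambda1 (m : nat) (beta : R) : Rbar := Lub_Rbar (A_beta m beta).

(* Main.v *)
Require Import Defs.
From Stdlib Require Import Reals Lra Lia.
From Coquelicot Require Import Coquelicot.
Open Scope R_scope.

Lemma sumto_const (n : nat) (c : R) : sumto n (fun _ => c) = INR n * c.
Proof.
  induction n as [|n IH]; simpl sumto.
  - simpl; ring.
  - rewrite IH, S_INR; ring.
Qed.

Lemma sumto_ext_const (n : nat) (f : nat -> R) (c : R) :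
  (forall i, f i = c) -> sumto n f = INR n * c.
Proof.
  intro H; induction n as [|n IH]; simpl sumto.
  - simpl; ring.
  - rewrite IH, S_INR, H; ring.
Qed.

Theorem lemma5p1 (m : nat) (beta : R) :
  (2 <= m)%nat -> 0 < beta < 1 / 2 ->
  (exists lam : R, A_beta m beta lam) /\ Rbar_lt 0 (lambda1 m beta).
Proof.
  intros Hm Hb.
  set (t := 2 * beta).
  set (lam := (1 - 2*beta)^2 / 4).
  assert (Hmpos : 0 < INR m) by (apply lt_0_INR; lia).
  assert (Hp : 0 < p_beta beta <= t).
  { unfold p_beta, t. split.
    - apply Rdiv_lt_0_compat; lra.
    - apply Rmult_le_reg_r with (1 - beta); [lra|].
      unfold Rdiv; rewrite Rmult_assoc, Rinv_l by lra. nra. }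
  assert (Ht : 0 < t < 1) by (unfold t; lra).
  assert (Hlam : 0 < lam) by (unfold lam; apply Rdiv_lt_0_compat; [apply pow_lt; lra|lra]).
  assert (HA : A_beta m beta lam).
  { split; [exact Hlam|].
    exists (fun x => 1 + t ^ length x), (1/2), 3.
    split; [lra|]. split; [lra|].
    assert (Htk : forall k, 0 < t ^ k <= 1).
    { intro k; split; [apply pow_lt; lra|].
      rewrite <- (pow1 k); apply pow_incr; lra. }
    split.
    - intros x _. destruct (Htk (length x)); lra.
    - intros x _. destruct x as [|a xh]; unfold Defs.Delta; simpl length.
      + rewrite (sumto_ext_const _ _ (1 + t ^ 1)) by reflexivity. simpl pow.
        field_simplify; [|lra]. unfold lam, t. nra.
      + rewrite (sumto_ext_const _ _ (1 + t ^ S (S (length xh)))) by reflexivity.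
        set (j := length xh).
        set (p := p_beta beta) in *.
        assert (E : beta * (1 + t ^ j) + (1 - beta) / INR m * (INR m * (1 + t ^ S (S j)))
                     - (1 + t ^ S j) = - (t ^ j * (beta * (1 - 2*beta)^2))).
        { simpl pow. field_simplify; [|lra]. unfold t. field. }
        rewrite E.
        assert (Hpj : p ^ S j <= p * t ^ j).
        { simpl pow. apply Rmult_le_compat_l; [lra|]. apply pow_incr; lra. }
        assert (Hpjpos : 0 < p ^ S j) by (apply pow_lt; lra).
        destruct (Htk (S j)) as [H1 H2]. destruct (Htk j) as [H3 H4].
        apply Rmult_le_reg_r with (p ^ S j); [exact Hpjpos|].
        rewrite Rmult_0_l, Rmult_plus_distr_r.
        unfold Rdiv. rewrite Rmult_assoc, Rinv_l by lra. rewrite Rmult_1_r.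
        assert (lam * (1 + t ^ S j) * p ^ S j <= lam * 2 * (t * t ^ j)).
        { apply Rle_trans with (lam * 2 * (p * t^j)).
          - apply Rmult_le_compat; try nra.
          - apply Rmult_le_compat_l; [lra|]. apply Rmult_le_compat_r; lra. }
        assert (lam * 2 * (t * t ^ j) = t ^ j * (beta * (1 - 2 * beta) ^ 2)).
        { unfold lam, t. field. }
        lra. }
  split; [exists lam; exact HA|].
  unfold lambda1.
  destruct (Lub_Rbar_correct (A_beta m beta)) as [Hub _].
  specialize (Hub lam HA).
  destruct (Lub_Rbar (A_beta m beta)) as [r| |]; simpl in *; lra.
Qed.
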